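(* Let $(G,d,(D_\lambda)_{\lambda>0},\Gamma,V)$ be a dilation datum, and let $\lambda_0>1$ with $D:=D_{\lambda_0}$ satisfying $D(\Gamma)\subset\Gamma$, and suppose $0<r_-<r_+$ satisfy $B(e,r_-)\subset V\subset B(e,r_+)$ and $\lambda_0>1+r_+/r_-$. Let $M\subset\Gamma$ be a non-empty finite set. Then: (a) if $e\in M$, then for every bounded $B\subset G$ there is $n_0\in\mathbb N$ with $B\subset V(n_0,M)$; (b) for all $k\in\mathbb N$, $B(e,\lambda_0^{k+1}C_-)\subset V(k+1)\subset B(e,\lambda_0^{k+1}C_+)$, where $C_-=\big(\lambda_0-(1+\tfrac{r_+}{r_-})\big)\tfrac{r_-}{\lambda_0}$ and $C_+=\lambda_0r_-\big(1+\tfrac{\lambda_0}{\lambda_0-1}\big)$; (c) if $\mathrm{dist}(M,\{e\})\ge\frac{2\lambda_0r_+}{\lambda_0-1}$, then $\mathrm{dist}(V(n,M),\{e\})\to\infty$ as $n\to\infty$. In particular $|V(n,M)\cap\Gamma|\to\infty$ as $n\to\infty$.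
   Context: Dilation datum $(G,d,(D_\lambda),\Gamma,V)$: $G$ connected lcsc group, $d$ left-invariant metric inducing its topology, $\lambda\mapsto D_\lambda$ homomorphism $(\mathbb R_{>0},\cdot)\to\mathrm{Aut}(G)$ with $d(D_\lambda g,D_\lambda h)=\lambda d(g,h)$; $\Gamma$ a uniform lattice with $D_\lambda(\Gamma)\subset\Gamma$ for some $\lambda>1$; $V$ a bounded Borel set containing an open identity neighbourhood with $G=\bigsqcup_{\gamma\in\Gamma}\gamma V$. $B(g,r)$ is the open $d$-ball. For $M\subset\Gamma$: $V(0,M):=MV$ and $V(n,M):=D\big((V(n-1,M)\cap\Gamma)V\big)$ for $n\ge1$; $V(n):=V(n,\{e\})$. $\mathrm{dist}$ is the distance between sets with respect to $d$. *)

(* Defs.v *)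
From Stdlib Require Import Reals List.
Open Scope R_scope.
Set Implicit Arguments.
Unset Strict Implicit.

Record is_group (G : Type) (mul : G -> G -> G) (inv : G -> G) (e : G) : Prop := {
  grp_assoc : forall x y z, mul x (mul y z) = mul (mul x y) z;
  grp_id_l : forall x, mul e x = x;
  grp_id_r : forall x, mul x e = x;
  grp_inv_l : forall x, mul (inv x) x = e;
  grp_inv_r : forall x, mul x (inv x) = e }.

Record is_metric (G : Type) (d : G -> G -> R) : Prop := {
  met_nonneg : forall x y, 0 <= d x y;
  met_eq0 : forall x y, d x y = 0 <-> x = y;
  met_sym : forall x y, d x y = d y x;
  met_tri : forall x y z, d x z <= d x y + d y z }.

Definition ball (G : Type) (d : G -> G -> R) (g : G) (r : R) : G -> Prop :=
  fun h => d g h < r.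

Definition is_open (G : Type) (d : G -> G -> R) (U : G -> Prop) : Prop :=
  forall x, U x -> exists r, 0 < r /\ forall y, ball d x r y -> U y.

Definition is_compact (G : Type) (d : G -> G -> R) (K : G -> Prop) : Prop :=
  forall (I : Type) (U : I -> G -> Prop),
    (forall i, is_open d (U i)) ->
    (forall x, K x -> exists i, U i x) ->
    exists l : list I, forall x, K x -> exists i, In i l /\ U i x.

Definition is_connected (G : Type) (d : G -> G -> R) : Prop :=
  forall U W : G -> Prop, is_open d U -> is_open d W ->
    (forall x, U x \/ W x) -> (forall x, ~ (U x /\ W x)) ->
    (forall x, U x) \/ (forall x, W x).

Definition locally_compact (G : Type) (d : G -> G -> R) : Prop :=
  forall x, exists K, is_compact d K /\
    exists r, 0 < r /\ forall y, ball d x r y -> K y.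

Definition second_countable (G : Type) (d : G -> G -> R) : Prop :=
  exists Bs : nat -> G -> Prop, (forall n, is_open d (Bs n)) /\
    forall U x, is_open d U -> U x -> exists n, Bs n x /\ forall y, Bs n y -> U y.

Definition continuous_map (G : Type) (d : G -> G -> R) (f : G -> G) : Prop :=
  forall x eps, 0 < eps -> exists delta, 0 < delta /\
    forall y, d x y < delta -> d (f x) (f y) < eps.

Definition continuous_mul (G : Type) (d : G -> G -> R) (mul : G -> G -> G) : Prop :=
  forall x y eps, 0 < eps -> exists delta, 0 < delta /\
    forall x' y', d x x' < delta -> d y y' < delta -> d (mul x y) (mul x' y') < eps.

Inductive borel (G : Type) (d : G -> G -> R) : (G -> Prop) -> Prop :=
| borel_open U : is_open d U -> borel d U
| borel_compl A : borel d A -> borel d (fun x => ~ A x)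
| borel_union (A : nat -> G -> Prop) :
    (forall n, borel d (A n)) -> borel d (fun x => exists n, A n x)
| borel_ext A B : (forall x, A x <-> B x) -> borel d A -> borel d B.

Definition is_bounded (G : Type) (d : G -> G -> R) (B : G -> Prop) : Prop :=
  exists g r, forall x, B x -> d g x <= r.

Definition is_automorphism (G : Type) (mul : G -> G -> G) (d : G -> G -> R)
  (f : G -> G) : Prop :=
  (forall x y, f (mul x y) = mul (f x) (f y)) /\
  continuous_map d f /\
  exists g : G -> G, (forall x, f (g x) = x) /\ (forall x, g (f x) = x) /\
                     continuous_map d g.

Definition is_uniform_lattice (G : Type) (mul : G -> G -> G) (inv : G -> G) (e : G)
  (d : G -> G -> R) (Gam : G -> Prop) : Prop :=
  (Gam e /\ (forall x y, Gam x -> Gam y -> Gam (mul x y)) /\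
   (forall x, Gam x -> Gam (inv x))) /\
  (exists r, 0 < r /\ forall g, Gam g -> d e g < r -> g = e) /\
  (exists K, is_compact d K /\
     forall g, exists gam k, Gam gam /\ K k /\ g = mul gam k).

(** Dilation datum (G, d, (D_lambda), Gamma, V). D is a function of lambda,
    only its values at lambda > 0 matter. *)
Record dilation_datum (G : Type) (mul : G -> G -> G) (inv : G -> G) (e : G)
  (d : G -> G -> R) (D : R -> G -> G) (Gam V : G -> Prop) : Prop := {
  dd_group : is_group mul inv e;
  dd_metric : is_metric d;
  dd_left_inv : forall g x y, d (mul g x) (mul g y) = d x y;
  dd_mul_cont : continuous_mul d mul;
  dd_inv_cont : continuous_map d inv;
  dd_connected : is_connected d;
  dd_loc_compact : locally_compact d;
  dd_sec_countable : second_countable d;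
  dd_aut : forall lam, 0 < lam -> is_automorphism mul d (D lam);
  dd_hom : forall lam mu, 0 < lam -> 0 < mu ->
             forall g, D (lam * mu) g = D lam (D mu g);
  dd_scale : forall lam, 0 < lam -> forall g h, d (D lam g) (D lam h) = lam * d g h;
  dd_lattice : is_uniform_lattice mul inv e d Gam;
  dd_lattice_dil : exists lam, 1 < lam /\ forall gam, Gam gam -> Gam (D lam gam);
  dd_V_bounded : is_bounded d V;
  dd_V_borel : borel d V;
  dd_V_nbhd : exists U, is_open d U /\ U e /\ forall x, U x -> V x;
  dd_V_tiling : forall g, exists gam, Gam gam /\ V (mul (inv gam) g) /\
                  forall gam', Gam gam' -> V (mul (inv gam') g) -> gam' = gam }.

Fixpoint Vnm (G : Type) (mul : G -> G -> G) (Gam V : G -> Prop) (Dl : G -> G)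
  (M : G -> Prop) (n : nat) : G -> Prop :=
  match n with
  | O => fun g => exists m v, M m /\ V v /\ g = mul m v
  | S n' => fun g => exists gam v, Vnm mul Gam V Dl M n' gam /\ Gam gam /\ V v /\
                                   g = Dl (mul gam v)
  end.

(** c <= dist(A,B) (dist = inf of d(a,b), inf of empty set = +oo). *)
Definition dist_ge (G : Type) (d : G -> G -> R) (A B : G -> Prop) (c : R) : Prop :=
  forall a b, A a -> B b -> c <= d a b.

Definition dist_to_infty (G : Type) (d : G -> G -> R) (A : nat -> G -> Prop)
  (B : G -> Prop) : Prop :=
  forall c, exists N, forall n, (N <= n)%nat -> dist_ge d (A n) B c.

Definition card_ge (G : Type) (A : G -> Prop) (N : nat) : Prop :=
  exists l : list G, NoDup l /\ (N <= length l)%nat /\ forall x, In x l -> A x.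

(* Main.v *)
Require Import Defs.
From Stdlib Require Import Reals List Lra Lia FinFun ZArith.
Open Scope R_scope.

Lemma nat_unbounded (r : R) : exists N : nat, r < INR N.
Proof.
  destruct (archimed r) as [H1 _].
  destruct (Z_le_gt_dec (up r) 0) as [Hz|Hz].
  - exists 0%nat. simpl. apply IZR_le in Hz. lra.
  - exists (Z.to_nat (up r)). rewrite INR_IZR_INZ, Z2Nat.id by lia. lra.
Qed.

Lemma pow_grow (l c C : R) : 1 < l -> 0 < c -> exists N : nat, forall n, (N <= n)%nat -> C <= l ^ n * c.
Proof.
  intros Hl Hc. destruct (nat_unbounded (C / (c * (l - 1)))) as [N HN].
  exists N. intros n Hn.
  assert (H1 := poly n (l - 1) ltac:(lra)). replace (1 + (l - 1)) with l in H1 by ring.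
  assert (H2 : INR N <= INR n) by (apply le_INR; exact Hn).
  assert (H3 : C < INR N * (c * (l - 1))).
  { apply (Rmult_lt_compat_r (c * (l-1))) in HN; [|nra]. unfold Rdiv in HN.
    rewrite Rmult_assoc, Rinv_l in HN by nra. lra. }
  assert (0 <= INR n) by apply pos_INR.
  assert (H4 : (1 + INR n * (l - 1)) * c <= l ^ n * c) by (apply Rmult_le_compat_r; lra).
  assert (H5 : INR N * (c * (l-1)) <= INR n * (c*(l-1))) by (apply Rmult_le_compat_r; nra).
  nra.
Qed.

Theorem theorem5 (G : Type) (mul : G -> G -> G) (inv : G -> G) (e : G)
  (d : G -> G -> R) (D : R -> G -> G) (Gam V : G -> Prop)
  (HD : dilation_datum mul inv e d D Gam V)
  (lam0 rm rp : R) (Hlam0 : 1 < lam0)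
  (HDGam : forall gam, Gam gam -> Gam (D lam0 gam))
  (Hrm : 0 < rm) (Hrmp : rm < rp)
  (HVin : forall g, ball d e rm g -> V g)
  (HVout : forall g, V g -> ball d e rp g)
  (Hlam : 1 + rp / rm < lam0)
  (M : G -> Prop) (HMfin : exists l : list G, forall x, M x <-> In x l)
  (HMne : exists m, M m) (HMGam : forall m, M m -> Gam m) :
  (* (a) *)
  (M e -> forall B : G -> Prop, is_bounded d B ->
     exists n0 : nat, forall x, B x -> Vnm mul Gam V (D lam0) M n0 x) /\
  (* (b) *)
  (forall k : nat,
     let Cm := (lam0 - (1 + rp / rm)) * (rm / lam0) in
     let Cp := lam0 * rm * (1 + lam0 / (lam0 - 1)) in
     (forall g, ball d e (lam0 ^ (k + 1) * Cm) g ->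
                Vnm mul Gam V (D lam0) (fun x => x = e) (k + 1) g) /\
     (forall g, Vnm mul Gam V (D lam0) (fun x => x = e) (k + 1) g ->
                ball d e (lam0 ^ (k + 1) * Cp) g)) /\
  (* (c) *)
  (dist_ge d M (fun x => x = e) (2 * lam0 * rp / (lam0 - 1)) ->
     dist_to_infty d (fun n => Vnm mul Gam V (D lam0) M n) (fun x => x = e)) /\
  (* "in particular": #|V(n,M) ∩ Gamma| -> oo (for nontrivial G) *)
  ((exists g, g <> e) ->
     forall N : nat, exists n0 : nat, forall n, (n0 <= n)%nat ->
       card_ge (fun x => Vnm mul Gam V (D lam0) M n x /\ Gam x) N).
Proof.
  destruct (dd_group HD) as [assoc idl idr invl invr].
  destruct (dd_metric HD) as [dnn deq0 dsym dtri].
  pose proof (dd_left_inv HD) as dli.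
  assert (Hl0 : 0 < lam0) by lra.
  destruct (dd_aut HD Hl0) as [Dhom [_ [Dinv [DDinv _]]]].
  pose proof (dd_scale HD Hl0) as Dsc.
  destruct (dd_lattice HD) as [[Gam_e [Gam_mul _]] _].
  pose proof (dd_V_tiling HD) as Htile.
  set (E := fun x : G => x = e).
  assert (De : D lam0 e = e).
  { assert (H := Dhom e e). rewrite idl in H.
    assert (H2 : mul (inv (D lam0 e)) (D lam0 e) = mul (inv (D lam0 e)) (mul (D lam0 e) (D lam0 e)))
      by (rewrite <- H; reflexivity).
    rewrite assoc, invl, idl in H2. congruence. }
  assert (dDe : forall x, d e (D lam0 x) = lam0 * d e x).
  { intro x. rewrite <- Dsc, De. reflexivity. }
  assert (tile : forall h, exists g v, Gam g /\ V v /\ h = mul g v).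
  { intro h. destruct (Htile h) as [g [Hg [Hv _]]]. exists g, (mul (inv g) h).
    repeat split; auto. rewrite assoc, invr, idl. reflexivity. }
  assert (tri_up : forall g v, d e (mul g v) <= d e g + d e v).
  { intros g v. eapply Rle_trans; [apply (dtri _ g)|].
    rewrite <- (idr g) at 2. rewrite dli. lra. }
  assert (tri_lo : forall g v, d e g - d e v <= d e (mul g v)).
  { intros g v. assert (H := dtri e (mul g v) g).
    assert (Hx : d (mul g v) g = d e v).
    { rewrite dsym. rewrite <- (idr g) at 1. rewrite dli. reflexivity. }
    lra. }
  assert (dee : d e e = 0) by (apply deq0; reflexivity).
  assert (Ve : V e) by (apply HVin; unfold ball; lra).
  assert (dV : forall v, V v -> d e v < rp) by (intros v Hv; apply HVout; exact Hv).
  assert (cancel : forall g x y, mul g x = mul g y -> x = y).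
  { intros g x y H. assert (H2 : mul (inv g) (mul g x) = mul (inv g) (mul g y)) by congruence.
    rewrite !assoc, invl, !idl in H2. exact H2. }
  assert (dIter : forall n x, d e (Nat.iter n (D lam0) x) = lam0 ^ n * d e x).
  { induction n; intro x; simpl. ring. rewrite dDe, IHn. ring. }
  assert (GamIter : forall n x, Gam x -> Gam (Nat.iter n (D lam0) x)).
  { induction n; intros x Hx; simpl; auto. }
  assert (IterE : forall n, Nat.iter n (D lam0) e = e).
  { induction n; simpl; auto. rewrite IHn. exact De. }
  assert (transl : forall g0, M g0 -> forall n x, Vnm mul Gam V (D lam0) E n x ->
                     Vnm mul Gam V (D lam0) M n (mul (Nat.iter n (D lam0) g0) x)).
  { intros g0 Hg0. induction n; intros x Hx.
    - destruct Hx as [m [v [Hm [Hv Hx]]]]. unfold E in Hm. subst m x.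
      simpl. exists g0, v. rewrite idl. auto.
    - destruct Hx as [g [v [Hg [HgG [Hv Hx]]]]]. subst x. simpl.
      exists (mul (Nat.iter n (D lam0) g0) g), v.
      split; [auto|split; [|split; [auto|]]].
      + apply Gam_mul; auto; apply GamIter; auto.
      + rewrite <- Dhom, assoc. reflexivity. }
  set (t := / (lam0 - 1)).
  assert (Ht : (lam0 - 1) * t = 1) by (unfold t; field; lra).
  assert (Htp : 0 < t) by (unfold t; apply Rinv_0_lt_compat; lra).
  assert (Hrp : rp < (lam0 - 1) * rm).
  { assert (H := Rmult_lt_compat_r rm _ _ Hrm Hlam). unfold Rdiv in H.
    rewrite Rmult_plus_distr_r, Rmult_assoc, Rinv_l in H by lra. lra. }
  set (b := lam0 * rp * t).
  assert (Hb : b * (lam0 - 1) = lam0 * rp).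
  { unfold b. replace (lam0 * rp * t * (lam0 - 1)) with (lam0 * rp * ((lam0 - 1) * t)) by ring.
    rewrite Ht. ring. }
  assert (Hbp : 0 < b) by (unfold b; apply Rmult_lt_0_compat; nra).
  set (a := rm - rp * t).
  assert (Hap : 0 < a).
  { unfold a. assert (H : rp * t < (lam0 - 1) * rm * t) by (apply Rmult_lt_compat_r; lra).
    replace ((lam0 - 1) * rm * t) with (rm * ((lam0 - 1) * t)) in H by ring. rewrite Ht in H. lra. }
  assert (lowinv : forall n g, d e g < lam0 ^ (S n) * a + b -> Vnm mul Gam V (D lam0) E (S n) g).
  { induction n; intros g Hg.
    - exists e, (Dinv g). split; [|split; [auto|split]].
      + exists e, e. unfold E. split; [reflexivity|split; [auto|]]. rewrite idl. reflexivity.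
      + apply HVin. unfold ball. rewrite <- (DDinv g), dDe in Hg.
        unfold a, b in Hg. simpl in Hg.
        assert (H : lam0 * d e (Dinv g) < lam0 * rm).
        { replace (lam0 * rm) with (lam0 * 1 * (rm - rp * t) + lam0 * rp * t) by ring. exact Hg. }
        nra.
      + rewrite idl, DDinv. reflexivity.
    - destruct (tile (Dinv g)) as [g1 [v [Hg1 [Hv Hh]]]].
      exists g1, v. split; [|split; [auto|split; [auto|]]].
      + apply IHn. rewrite <- (DDinv g), dDe, Hh in Hg.
        assert (H1 := tri_lo g1 v). assert (H2 := dV v Hv).
        change (lam0 ^ S (S n)) with (lam0 * lam0 ^ S n) in Hg.
        assert (H3 : lam0 * d e g1 < lam0 * (lam0 ^ S n * a + b)) by nra.
        nra.
      + rewrite <- Hh, DDinv. reflexivity. }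
  assert (upinv : forall n g, Vnm mul Gam V (D lam0) E n g -> d e g < lam0 ^ n * (rp + b) - b).
  { induction n; intros g Hg.
    - destruct Hg as [m [v [Hm [Hv Hg]]]]. unfold E in Hm. subst. rewrite idl.
      simpl. assert (H := dV v Hv). lra.
    - destruct Hg as [g1 [v [Hg1 [_ [Hv Hg]]]]]. subst g. rewrite dDe.
      assert (H1 := tri_up g1 v). assert (H2 := dV v Hv). assert (H3 := IHn g1 Hg1).
      change (lam0 ^ S n) with (lam0 * lam0 ^ n).
      assert (H4 : lam0 * d e (mul g1 v) < lam0 * (lam0 ^ n * (rp + b) - b + rp)) by nra.
      nra. }
  split; [|split; [|split]].
  -
    intros HMe B [g0 [r HB]].
    destruct (pow_grow lam0 a (d e g0 + r) Hlam0 Hap) as [N HN].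
    exists (S N). intros x Hx.
    assert (H := transl e HMe (S N) x). rewrite IterE, idl in H. apply H.
    apply lowinv. assert (H1 := HB x Hx). assert (H2 := dtri e g0 x).
    assert (H3 := HN (S N) ltac:(lia)). lra.
  -
    intros k Cm Cp. rewrite Nat.add_1_r. split.
    + intros g Hg. apply lowinv. unfold ball in Hg.
      assert (HY : 0 < lam0 ^ k) by (apply pow_lt; lra).
      assert (Heq : lam0 ^ S k * Cm = lam0 ^ k * (lam0 * rm - rm - rp)).
      { unfold Cm. simpl. field. split; lra. }
      assert (Hlt : lam0 * t = 1 + t) by lra.
      assert (Heq2 : lam0 ^ S k * a = lam0 ^ k * (lam0 * rm - rm - rp) + lam0 ^ k * a).
      { simpl. unfold a. replace (lam0 * rm - rm - rp) with (lam0 * rm - rm - rp * (lam0 * t - t)) by (rewrite Hlt; ring).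
        ring. }
      assert (0 < lam0 ^ k * a) by nra. lra.
    + intros g Hg. unfold ball. eapply Rlt_le_trans; [apply upinv; exact Hg|].
      assert (HX : 0 < lam0 ^ S k) by (apply pow_lt; lra).
      assert (Hrb : rp + b <= Cp).
      { unfold Cp, b. unfold Rdiv. fold t.
        replace (rp + lam0 * rp * t) with (rp * (1 + lam0 * t)) by ring.
        apply Rmult_le_compat_r; nra. }
      assert (lam0 ^ S k * (rp + b) <= lam0 ^ S k * Cp) by (apply Rmult_le_compat_l; lra).
      lra.
  -
    intros Hdist.
    assert (cinv : forall n x, Vnm mul Gam V (D lam0) M n x -> lam0 ^ n * (rp * t) + b <= d e x).
    { induction n; intros x Hx.
      - destruct Hx as [m [v [Hm [Hv Hx]]]]. subst x.
        assert (H1 := Hdist m e Hm eq_refl). rewrite dsym in H1.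
        assert (H2 := tri_lo m v). assert (H3 := dV v Hv).
        assert (Hd : 2 * lam0 * rp / (lam0 - 1) = 2 * b) by (unfold b, Rdiv; fold t; ring).
        rewrite Hd in H1. simpl.
        assert (Hlt : lam0 * t = 1 + t) by lra.
        assert (rp * t + b = 2 * b - rp).
        { unfold b. replace (lam0 * rp * t) with (rp * (lam0 * t)) by ring. rewrite Hlt. ring. }
        lra.
      - destruct Hx as [g1 [v [Hg1 [_ [Hv Hx]]]]]. subst x. rewrite dDe.
        assert (H1 := tri_lo g1 v). assert (H2 := dV v Hv). assert (H3 := IHn g1 Hg1).
        change (lam0 ^ S n) with (lam0 * lam0 ^ n).
        assert (H4 : lam0 * (lam0 ^ n * (rp * t) + b - rp) <= lam0 * d e (mul g1 v)) by nra.
        nra. }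
    intros C. destruct (pow_grow lam0 (rp * t) C Hlam0 ltac:(nra)) as [N HN].
    exists N. intros n Hn x y Hx Hy. rewrite Hy, dsym.
    assert (H1 := cinv n x Hx). assert (H2 := HN n Hn). lra.
  -
    intros [g Hg] N.
    assert (Hdg : 0 < d e g).
    { destruct (dnn e g) as [H|H]; auto. exfalso. apply Hg. symmetry. apply deq0. auto. }
    destruct (pow_grow lam0 (d e g) rp Hlam0 Hdg) as [K HK].
    destruct (tile (Nat.iter K (D lam0) g)) as [g1 [v [Hg1 [Hv Hh]]]].
    assert (Hg1e : g1 <> e).
    { intro Heq. subst g1. rewrite idl in Hh. assert (H := dIter K g). rewrite Hh in H.
      assert (H2 := dV v Hv). assert (H3 := HK K (le_n K)). lra. }
    assert (Hd1 : 0 < d e g1).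
    { destruct (dnn e g1) as [H|H]; auto. exfalso. apply Hg1e. symmetry. apply deq0. auto. }
    destruct (pow_grow lam0 a (lam0 ^ N * d e g1 + 1) Hlam0 Hap) as [K2 HK2].
    exists (S K2). intros n Hn.
    destruct HMne as [m Hm].
    set (gn := Nat.iter n (D lam0) m).
    exists (map (fun j => mul gn (Nat.iter j (D lam0) g1)) (seq 0 N)).
    split; [|split].
    + apply Injective_map_NoDup; [|apply seq_NoDup].
      intros i j Hij. apply cancel in Hij.
      assert (H := f_equal (d e) Hij). rewrite !dIter in H.
      assert (H' : lam0 ^ i = lam0 ^ j) by (apply (Rmult_eq_reg_r (d e g1)); lra).
      destruct (Nat.lt_total i j) as [Hl|[Hl|Hl]]; auto;
        [assert (H2 := Rlt_pow lam0 _ _ Hlam0 Hl) | assert (H2 := Rlt_pow lam0 _ _ Hlam0 Hl)]; lra.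
    + rewrite length_map, length_seq. lia.
    + intros x Hx. apply in_map_iff in Hx. destruct Hx as [j [Hx Hj]]. subst x.
      apply in_seq in Hj. split.
      * destruct n as [|n']; [lia|]. unfold gn. apply transl; auto.
        apply lowinv. rewrite dIter.
        assert (H1 : lam0 ^ j <= lam0 ^ N) by (apply Rle_pow; lia || lra).
        assert (H2 := HK2 (S n') ltac:(lia)).
        assert (lam0 ^ j * d e g1 <= lam0 ^ N * d e g1) by (apply Rmult_le_compat_r; lra).
        lra.
      * apply Gam_mul. unfold gn. apply GamIter. auto. apply GamIter. auto.
Qed.
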